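(* Let $(p_i)_{i\ge0}$ be an offspring distribution with mean $\kappa=\sum_i ip_i<1$, $p_0>0$, and $p_i=\tilde L(i)\,i^{-\beta}$ for $i\ge1$, where $\beta>2$ and $\tilde L$ is slowly varying. Let $N$ be the total number of vertices and $N^{(0)}$ the number of leaves of a Galton–Watson tree with offspring distribution $(p_i)$. Then, as $n\to\infty$, $$\mathbb P\big(|N^{(0)}-p_0N|\ge n\big)=o\big(\tilde L(n)n^{1-\beta}\big)=o(np_n)=o\big(\mathbb P(N\ge n)\big).$$ *)

(* Defs.v *)
From Stdlib Require Import Reals List.
Import ListNotations.
Open Scope R_scope.

(* Finite rooted plane (ordered) trees. *)
Inductive ptree : Type := Node : list ptree -> ptree.

Fixpoint tsize (t : ptree) : nat :=
  match t with
  | Node ts =>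
      S ((fix go (l : list ptree) : nat :=
            match l with [] => 0%nat | u :: l' => (tsize u + go l')%nat end) ts)
  end.

Fixpoint tleaves (t : ptree) : nat :=
  match t with
  | Node [] => 1%nat
  | Node ts =>
      (fix go (l : list ptree) : nat :=
         match l with [] => 0%nat | u :: l' => (tleaves u + go l')%nat end) ts
  end.

Fixpoint gw_weight (p : nat -> R) (t : ptree) : R :=
  match t with
  | Node ts =>
      p (length ts) *
      (fix go (l : list ptree) : R :=
         match l with [] => 1 | u :: l' => gw_weight p u * go l' end) ts
  end.

(* [gw_prob p E l] : l is the probability that the Galton-Watson tree with
   offspring distribution p is a finite tree satisfying E, i.e. l is the sum
   of gw_weight p t over all finite plane trees t with E t (supremum of
   finite partial sums over distinct trees). *)
Definition gw_prob (p : nat -> R) (E : ptree -> Prop) (l : R) : Prop :=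
  is_lub (fun s => exists L : list ptree,
             NoDup L /\ Forall E L /\
             s = fold_right (fun t a => gw_weight p t + a) 0 L) l.

Definition slowly_varying_seq (L : nat -> R) : Prop :=
  (forall n : nat, (1 <= n)%nat -> 0 < L n) /\
  forall lam : R, 0 < lam ->
    Un_cv (fun n => L (Z.to_nat (Int_part (lam * INR n))) / L n) 1.

Definition little_o (f g : nat -> R) : Prop :=
  forall eps : R, 0 < eps -> exists N : nat, forall n : nat, (N <= n)%nat ->
    Rabs (f n) <= eps * Rabs (g n).

(* Main.v *)
Require Import Defs.
From Stdlib Require Import Reals List Lra Lia Psatz ClassicalEpsilon ZArith.
Import ListNotations.
Open Scope R_scope.

Definition sumL {A} (f : A -> R) (l : list A) : R := fold_right (fun x a => f x + a) 0 l.
Definition prodL {A} (f : A -> R) (l : list A) : R := fold_right (fun x a => f x * a) 1 l.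
Definition psum (a : nat -> R) (K : nat) : R := sumL a (seq 0 K).

Lemma sumL_app {A} (f : A -> R) l1 l2 : sumL f (l1 ++ l2) = sumL f l1 + sumL f l2.
Proof. induction l1; simpl; [lra|]. unfold sumL in *; simpl; rewrite IHl1; lra. Qed.

Lemma sumL_flat_map {A B} (f : B -> R) (g : A -> list B) l :
  sumL f (flat_map g l) = sumL (fun x => sumL f (g x)) l.
Proof. induction l; simpl; auto. rewrite sumL_app, IHl; reflexivity. Qed.

Lemma sumL_map {A B} (f : B -> R) (h : A -> B) l : sumL f (map h l) = sumL (fun x => f (h x)) l.
Proof. induction l; simpl; auto. unfold sumL in *; simpl; rewrite IHl; auto. Qed.

Lemma sumL_nonneg {A} (f : A -> R) l : (forall x, 0 <= f x) -> 0 <= sumL f l.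
Proof. intros H; induction l; simpl; [lra|]. specialize (H a); unfold sumL in *; simpl; lra. Qed.

Lemma sumL_le {A} (f g : A -> R) l : (forall x, In x l -> f x <= g x) -> sumL f l <= sumL g l.
Proof. induction l; simpl; intros H; [lra|]. unfold sumL in *; simpl.
  assert (f a <= g a) by auto. assert (fold_right (fun x a => f x + a) 0 l <= fold_right (fun x a => g x + a) 0 l) by auto. lra. Qed.

Lemma sumL_plus {A} (f g : A -> R) l : sumL (fun x => f x + g x) l = sumL f l + sumL g l.
Proof. induction l; simpl; [lra|]. unfold sumL in *; simpl; rewrite IHl; lra. Qed.

Lemma sumL_scal {A} (f : A -> R) c l : sumL (fun x => c * f x) l = c * sumL f l.
Proof. induction l; simpl; [lra|]. unfold sumL in *; simpl; rewrite IHl; lra. Qed.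

Lemma sumL_ext {A} (f g : A -> R) l : (forall x, In x l -> f x = g x) -> sumL f l = sumL g l.
Proof. induction l; simpl; intros H; auto. unfold sumL in *; simpl. rewrite H by auto. rewrite IHl; auto. Qed.

Lemma sumL_incl {A} (f : A -> R) (L E : list A) :
  (forall x, 0 <= f x) -> NoDup L -> incl L E -> sumL f L <= sumL f E.
Proof.
  intros Hf HL; revert E; induction HL as [|a L' Ha HL IH]; intros E HI.
  - simpl. apply sumL_nonneg; auto.
  - assert (Hin : In a E) by (apply HI; left; auto).
    destruct (in_split _ _ Hin) as [E1 [E2 ->]].
    assert (IH' : sumL f L' <= sumL f (E1 ++ E2)).
    { apply IH. intros x Hx. assert (Hx' : In x (E1 ++ a :: E2)) by (apply HI; right; auto).
      apply in_app_or in Hx'. apply in_or_app. destruct Hx' as [H|[H|H]]; auto.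
      subst; contradiction. }
    rewrite sumL_app in *. simpl. unfold sumL at 1 3 in IH'; unfold sumL at 1 3. simpl. lra.
Qed.

Lemma psum_S a K : psum a (S K) = psum a K + a K.
Proof. unfold psum; rewrite seq_S, sumL_app; simpl. lra. Qed.

Lemma psum_nonneg a K : (forall k, 0 <= a k) -> 0 <= psum a K.
Proof. intros; apply sumL_nonneg; auto. Qed.

Lemma psum_le a b K : (forall k, a k <= b k) -> psum a K <= psum b K.
Proof. intros; apply sumL_le; auto. Qed.

Lemma psum_plus a b K : psum (fun k => a k + b k) K = psum a K + psum b K.
Proof. apply sumL_plus. Qed.

Lemma psum_scal a c K : psum (fun k => c * a k) K = c * psum a K.
Proof. apply sumL_scal. Qed.

Lemma sum_f_R0_psum a n : sum_f_R0 a n = psum a (S n).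
Proof. induction n; simpl. unfold psum; simpl; lra. rewrite IHn, (psum_S a (S n)). reflexivity. Qed.

Lemma psum_le_inf a l : (forall k, 0 <= a k) -> infinite_sum a l -> forall K, psum a K <= l.
Proof.
  intros Ha Hs K.
  assert (Hg : Un_growing (sum_f_R0 a)) by (intros n; simpl; specialize (Ha (S n)); lra).
  destruct K.
  - unfold psum; simpl. pose proof (growing_ineq _ _ Hg Hs 0). simpl in H. specialize (Ha 0%nat). lra.
  - rewrite <- sum_f_R0_psum. apply growing_ineq; auto.
Qed.


Definition ptree_rect2 (P : ptree -> Type)
  (H : forall ts, (forall u, In u ts -> P u) -> P (Node ts)) : forall t, P t.
Proof.
  fix F 1. intros [ts]. apply H.
  induction ts as [|a ts IH]; intros u Hu.
  - destruct Hu.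
  - destruct (excluded_middle_informative (a = u)) as [e|ne].
    + destruct e. apply F.
    + apply IH. destruct Hu; [contradiction|assumption].
Defined.

Lemma ptree_ind2 (P : ptree -> Prop)
  (H : forall ts, (forall u, In u ts -> P u) -> P (Node ts)) : forall t, P t.
Proof. apply ptree_rect2; auto. Qed.

Definition children (t : ptree) : list ptree := match t with Node ts => ts end.

Lemma tsize_node ts : tsize (Node ts) = S (fold_right (fun u a => (tsize u + a)%nat) 0%nat ts).
Proof. simpl. f_equal; induction ts; simpl; auto. Qed.

Lemma INR_tsize_node ts : INR (tsize (Node ts)) = 1 + sumL (fun u => INR (tsize u)) ts.
Proof. rewrite tsize_node, S_INR. rewrite Rplus_comm; f_equal. induction ts; simpl; [unfold sumL; simpl; lra|]. rewrite plus_INR, IHts. unfold sumL; simpl; lra. Qed.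

Lemma tleaves_node ts : INR (tleaves (Node ts)) = (match ts with [] => 1 | _ => 0 end) + sumL (fun u => INR (tleaves u)) ts.
Proof. destruct ts as [|a ts]. simpl; unfold sumL; simpl; lra.
  change (INR (tleaves a + (fix go (l : list ptree) : nat := match l with [] => 0%nat | u :: l' => (tleaves u + go l')%nat end) ts)%nat = 0 + sumL (fun u => INR (tleaves u)) (a::ts)).
  revert a; induction ts; intros b; simpl.
  - unfold sumL; simpl. rewrite plus_INR; simpl; lra.
  - rewrite plus_INR. specialize (IHts a). rewrite IHts. unfold sumL; simpl; lra.
Qed.

Lemma gw_weight_node q ts : gw_weight q (Node ts) = q (length ts) * prodL (gw_weight q) ts.
Proof. simpl. f_equal. Qed.

Lemma tsize_pos t : (1 <= tsize t)%nat.
Proof. destruct t; rewrite tsize_node; lia. Qed.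

Lemma tsize_child ts u : In u ts -> (tsize u < tsize (Node ts))%nat.
Proof. rewrite tsize_node. induction ts; simpl; [tauto|]. intros [->|H]; [lia|]. specialize (IHts H); lia. Qed.

Lemma tsize_ge_len ts : (length ts < tsize (Node ts))%nat.
Proof. rewrite tsize_node. induction ts; simpl; [lia|]. pose proof (tsize_pos a). lia. Qed.

Fixpoint Lam (g : nat -> R) (t : ptree) : R :=
  match t with Node ts => g (length ts) +
    (fix go (l : list ptree) : R := match l with [] => 0 | u :: l' => Lam g u + go l' end) ts end.

Lemma Lam_node g ts : Lam g (Node ts) = g (length ts) + sumL (Lam g) ts.
Proof. simpl. f_equal. Qed.

Lemma Lam_lin g1 g2 a b t : Lam (fun k => a * g1 k + b * g2 k) t = a * Lam g1 t + b * Lam g2 t.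
Proof.
  induction t as [ts IH] using ptree_ind2. rewrite !Lam_node.
  rewrite (sumL_ext _ (fun u => a * Lam g1 u + b * Lam g2 u)) by auto.
  rewrite sumL_plus, !sumL_scal. lra.
Qed.

Lemma Lam_ext g1 g2 t : (forall k, g1 k = g2 k) -> Lam g1 t = Lam g2 t.
Proof. intros H. induction t as [ts IH] using ptree_ind2. rewrite !Lam_node, H. f_equal. apply sumL_ext; auto. Qed.

Lemma Lam_size t : Lam (fun _ => 1) t = INR (tsize t).
Proof. induction t as [ts IH] using ptree_ind2. rewrite Lam_node, INR_tsize_node. f_equal. apply sumL_ext; auto. Qed.

Definition ind0 (k : nat) : R := match k with O => 1 | _ => 0 end.

Lemma Lam_leaves t : Lam ind0 t = INR (tleaves t).
Proof. induction t as [ts IH] using ptree_ind2. rewrite Lam_node, tleaves_node.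
  f_equal. destruct ts; reflexivity. apply sumL_ext; auto. Qed.

Lemma Lam_nonneg g t : (forall k, 0 <= g k) -> 0 <= Lam g t.
Proof. intros H. induction t as [ts IH] using ptree_ind2. rewrite Lam_node.
  assert (0 <= sumL (Lam g) ts).
  { clear H. induction ts; unfold sumL; simpl; [lra|]. assert (0 <= Lam g a) by (apply IH; left; auto).
    assert (0 <= sumL (Lam g) ts) by (apply IHts; intros; apply IH; right; auto). unfold sumL in H0; lra. }
  specialize (H (length ts)); lra. Qed.

Lemma gw_weight_nonneg q t : (forall k, 0 <= q k) -> 0 <= gw_weight q t.
Proof. intros H. induction t as [ts IH] using ptree_ind2. rewrite gw_weight_node.
  apply Rmult_le_pos; auto. clear H. induction ts; unfold prodL; simpl; [lra|].
  apply Rmult_le_pos. apply IH; left; auto. apply IHts. intros; apply IH; right; auto. Qed.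

Lemma map_inj_NoDup {A B} (f : A -> B) l : (forall x y, f x = f y -> x = y) -> NoDup l -> NoDup (map f l).
Proof. intros Hf H; induction H; simpl; constructor; auto.
  intro Hin. apply in_map_iff in Hin. destruct Hin as [y [E Hy]]. apply Hf in E; subst; contradiction. Qed.

Fixpoint tuples {A} (C : list A) (k : nat) : list (list A) :=
  match k with O => [[]] | S k' => flat_map (fun x => map (cons x) (tuples C k')) C end.

Lemma tuples_in {A} (C : list A) ts : (forall u, In u ts -> In u C) -> In ts (tuples C (length ts)).
Proof. induction ts; simpl; intros H; auto. apply in_flat_map. exists a; split; auto.
  apply in_map. auto. Qed.

Lemma tuples_len {A} (C : list A) k ts : In ts (tuples C k) -> length ts = k.
Proof. revert ts; induction k; simpl; intros ts H. destruct H as [<-|[]]; auto.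
  apply in_flat_map in H. destruct H as [x [_ H]]. apply in_map_iff in H. destruct H as [y [<- H]].
  simpl; f_equal; auto. Qed.

Lemma tuples_prod {A} (C : list A) (h : A -> R) k :
  sumL (prodL h) (tuples C k) = (sumL h C) ^ k.
Proof. induction k; simpl. unfold sumL, prodL; simpl; lra.
  rewrite sumL_flat_map. rewrite (sumL_ext _ (fun x => h x * sumL h C ^ k)).
  - rewrite (Rmult_comm (sumL h C)). rewrite <- (sumL_scal h (sumL h C ^ k)).
    apply sumL_ext. intros; lra.
  - intros x _. rewrite sumL_map. rewrite <- IHk, <- sumL_scal. apply sumL_ext. intros; reflexivity.
Qed.

Lemma tuples_NoDup {A} (C : list A) k : NoDup C -> NoDup (tuples C k).
Proof. intros HC. induction k; simpl. constructor; auto; constructor.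
  generalize (tuples C k) IHk. clear IHk. intros T HT.
  induction HC as [|c C Hc HC IHC]; simpl. constructor. apply NoDup_app.
  - apply map_inj_NoDup; auto. intros a b H; injection H; auto.
  - auto.
  - intros l Hl Hl'. apply in_map_iff in Hl. destruct Hl as [y [<- _]].
    apply in_flat_map in Hl'. destruct Hl' as [z [Hz Hz']]. apply in_map_iff in Hz'. destruct Hz' as [w [E _]].
    injection E; intros; subst. contradiction.
Qed.

Definition pdec : forall x y : ptree, {x = y} + {x <> y} := fun x y => excluded_middle_informative (x = y).
Definition allch (L : list ptree) : list ptree := nodup pdec (flat_map children L).


Lemma prodL_exp (f a : ptree -> R) ts :
  prodL (fun u => f u * exp (a u)) ts = prodL f ts * exp (sumL a ts).
Proof. induction ts; unfold prodL, sumL in *; simpl. rewrite exp_0; lra.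
  rewrite IHts, exp_plus. ring. Qed.

Lemma exists_K (L : list ptree) : exists K, forall t, In t L -> (length (children t) < K)%nat.
Proof. induction L. exists 0%nat; intros t []. destruct IHL as [K HK].
  exists (S (Nat.max K (length (children a)))). intros t [<-|H]. lia. specialize (HK t H). lia. Qed.

Lemma allch_spec L u t : In t L -> In u (children t) -> In u (allch L).
Proof. intros. unfold allch. apply nodup_In. apply in_flat_map. eauto. Qed.

Lemma allch_inv L u : In u (allch L) -> exists t, In t L /\ In u (children t).
Proof. unfold allch; intros H. apply nodup_In in H. apply in_flat_map in H. auto. Qed.

Definition cover (C : list ptree) (K : nat) : list ptree :=
  flat_map (fun k => map Node (tuples C k)) (seq 0 K).

Lemma cover_incl L K : (forall t, In t L -> (length (children t) < K)%nat) -> incl L (cover (allch L) K).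
Proof. intros HK [ts] Ht. unfold cover. apply in_flat_map. exists (length ts). split.
  apply in_seq. specialize (HK _ Ht). simpl in HK. lia.
  apply in_map. apply tuples_in. intros u Hu. apply (allch_spec L u (Node ts)); auto. Qed.

Lemma sum_cover (h : ptree -> R) C K :
  sumL h (cover C K) = psum (fun k => sumL (fun ts => h (Node ts)) (tuples C k)) K.
Proof. unfold cover, psum. rewrite sumL_flat_map. apply sumL_ext. intros. rewrite sumL_map. reflexivity. Qed.

Lemma size_induction (Pr : list ptree -> Prop) :
  Pr [] ->
  (forall L, NoDup L -> Pr (allch L) -> Pr L) ->
  forall L, NoDup L -> Pr L.
Proof.
  intros H0 HS.
  assert (forall n L, (forall t, In t L -> (tsize t <= n)%nat) -> NoDup L -> Pr L).
  { induction n; intros L HL HN.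
    - destruct L as [|t L]; auto. specialize (HL t (or_introl eq_refl)). pose proof (tsize_pos t). lia.
    - apply HS; auto. apply IHn. intros u Hu. destruct (allch_inv _ _ Hu) as [[ts] [Ht Hu']].
      pose proof (tsize_child ts u Hu'). specialize (HL _ Ht). lia. apply NoDup_nodup. }
  intros L HN. apply (H (fold_right (fun t a => (tsize t + a)%nat) 0%nat L)); auto.
  clear. induction L; simpl; intros t Ht; [destruct Ht|]. destruct Ht as [<-|H]; [lia|]. specialize (IHL t H); lia.
Qed.

Lemma exp_lemma (q g : nat -> R) (z : R) :
  (forall k, 0 <= q k) -> 0 < z ->
  (forall K, psum (fun k => q k * exp (g k) * z ^ k) K <= z) ->
  forall L, NoDup L -> sumL (fun t => gw_weight q t * exp (Lam g t)) L <= z.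
Proof.
  intros Hq Hz HK. set (h := fun t => gw_weight q t * exp (Lam g t)).
  assert (Hh : forall t, 0 <= h t). { intros; unfold h. apply Rmult_le_pos. apply gw_weight_nonneg; auto. apply Rlt_le, exp_pos. }
  apply size_induction. unfold sumL; simpl; lra.
  intros L HN IH. destruct (exists_K L) as [K HKL].
  eapply Rle_trans. apply (sumL_incl h _ _ Hh HN (cover_incl L K HKL)).
  rewrite sum_cover. eapply Rle_trans; [|apply (HK K)]. apply psum_le. intros k.
  rewrite (sumL_ext _ (fun ts => q k * exp (g k) * prodL h ts)).
  - rewrite sumL_scal, tuples_prod. apply Rmult_le_compat_l.
    apply Rmult_le_pos; auto. apply Rlt_le, exp_pos.
    apply pow_incr. split; auto. apply sumL_nonneg; auto.
  - intros ts Hts. apply tuples_len in Hts. subst k. unfold h at 1.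
    rewrite gw_weight_node, Lam_node, exp_plus. unfold h. rewrite prodL_exp. ring.
Qed.

Lemma mass_le1 (q : nat -> R) : (forall k, 0 <= q k) -> (forall K, psum q K <= 1) ->
  forall L, NoDup L -> sumL (gw_weight q) L <= 1.
Proof.
  intros Hq H1 L HL. pose proof (exp_lemma q (fun _ => 0) 1 Hq Rlt_0_1) as E.
  rewrite (sumL_ext _ (fun t => gw_weight q t * exp (Lam (fun _ => 0) t))). apply E; auto.
  intros K. eapply Rle_trans; [|apply (H1 K)]. apply psum_le. intros k; rewrite exp_0, pow1. lra.
  intros t _. rewrite (Lam_ext _ (fun k => 0 * 1 + 0 * 1)) by (intros; ring). rewrite (Lam_lin (fun _ => 1) (fun _ => 1)). 
  replace (0 * Lam (fun _ => 1) t + 0 * Lam (fun _ => 1) t) with 0 by ring. rewrite exp_0; ring.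
Qed.

Lemma pow_le1 x n : 0 <= x <= 1 -> x ^ n <= 1.
Proof. intros H; induction n; simpl; [lra|]. apply Rle_trans with (1*1); [|lra]. apply Rmult_le_compat; try lra. apply pow_le; lra. Qed.

Lemma tuples_lin (C : list ptree) (w a : ptree -> R) (MA : R) k :
  (forall u, 0 <= w u) -> (forall u, 0 <= a u) -> sumL w C <= 1 ->
  sumL (fun u => w u * a u) C <= MA ->
  sumL (fun ts => prodL w ts * sumL a ts) (tuples C k) <= INR k * MA.
Proof.
  intros Hw Ha HW HM. assert (HMA : 0 <= MA).
  { eapply Rle_trans; [|apply HM]. apply sumL_nonneg. intros; apply Rmult_le_pos; auto. }
  assert (HW0 : 0 <= sumL w C) by (apply sumL_nonneg; auto).
  induction k; cbn [tuples]. unfold sumL, prodL; simpl; lra.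
  rewrite sumL_flat_map.
  rewrite (sumL_ext _ (fun x => (w x * a x) * sumL (prodL w) (tuples C k) + w x * sumL (fun ts => prodL w ts * sumL a ts) (tuples C k))).
  - rewrite sumL_plus. rewrite (sumL_ext (fun x => w x * a x * sumL (prodL w) (tuples C k)) (fun x => sumL (prodL w) (tuples C k) * (w x * a x))) by (intros; ring).
    rewrite (sumL_ext (fun x => w x * _) (fun x => sumL (fun ts => prodL w ts * sumL a ts) (tuples C k) * w x)) by (intros; ring).
    rewrite !sumL_scal, tuples_prod.
    assert (sumL w C ^ k <= 1) by (apply pow_le1; lra).
    assert (0 <= sumL (fun ts => prodL w ts * sumL a ts) (tuples C k)).
    { apply sumL_nonneg. intros ts. apply Rmult_le_pos. clear -Hw; induction ts; unfold prodL in *; simpl; [lra|]. apply Rmult_le_pos; auto. apply sumL_nonneg; auto. }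
    assert (0 <= sumL (fun u => w u * a u) C) by (apply sumL_nonneg; intros; apply Rmult_le_pos; auto).
    rewrite (S_INR k). pose proof (pow_le (sumL w C) k HW0).
    apply Rle_trans with (1 * MA + INR k * MA * 1); [|lra].
    apply Rplus_le_compat. apply Rmult_le_compat; auto. apply Rmult_le_compat; auto.
  - intros x _. rewrite sumL_map. unfold prodL at 1; simpl; fold (prodL w).
    rewrite (sumL_ext _ (fun ts => (w x * a x) * prodL w ts + w x * (prodL w ts * sumL a ts))).
    rewrite sumL_plus, !sumL_scal. reflexivity.
    intros ts _. unfold sumL at 1; simpl; fold (sumL a ts). unfold prodL; simpl; fold (prodL w ts). ring.
Qed.


Lemma lin_lemma (q g : nat -> R) (T kap : R) :
  (forall k, 0 <= q k) -> (forall k, 0 <= g k) -> (forall K, psum q K <= 1) ->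
  (forall K, psum (fun k => INR k * q k) K <= kap) -> kap < 1 ->
  (forall K, psum (fun k => q k * g k) K <= T) ->
  forall L, NoDup L -> sumL (fun t => gw_weight q t * Lam g t) L <= T / (1 - kap).
Proof.
  intros Hq Hg H1 Hk Hkap HT.
  assert (T0 : 0 <= T) by (specialize (HT 0%nat); unfold psum in HT; simpl in HT; lra).
  set (M := T / (1 - kap)).
  assert (M0 : 0 <= M) by (unfold M; apply Rmult_le_pos; auto; apply Rlt_le, Rinv_0_lt_compat; lra).
  assert (HM : T + kap * M = M) by (unfold M; field; lra).
  set (f := fun t => gw_weight q t * Lam g t).
  assert (Hf : forall t, 0 <= f t) by (intros; unfold f; apply Rmult_le_pos; [apply gw_weight_nonneg|apply Lam_nonneg]; auto).
  apply size_induction. unfold sumL; simpl; lra.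
  intros L HN IH. destruct (exists_K L) as [K HKL].
  eapply Rle_trans. apply (sumL_incl f _ _ Hf HN (cover_incl L K HKL)).
  rewrite sum_cover. fold M. rewrite <- HM.
  apply Rle_trans with (psum (fun k => q k * g k + M * (INR k * q k)) K).
  2:{ rewrite psum_plus, psum_scal. specialize (HT K). specialize (Hk K). apply Rplus_le_compat; auto.
      rewrite (Rmult_comm kap). apply Rmult_le_compat_l; auto. }
  apply psum_le. intros k.
  rewrite (sumL_ext _ (fun ts => (q k * g k) * prodL (gw_weight q) ts + q k * (prodL (gw_weight q) ts * sumL (Lam g) ts))).
  - rewrite sumL_plus, !sumL_scal, tuples_prod.
    assert (HW : sumL (gw_weight q) (allch L) <= 1) by (apply mass_le1; auto; apply NoDup_nodup).
    assert (HW0 : 0 <= sumL (gw_weight q) (allch L)) by (apply sumL_nonneg; intros; apply gw_weight_nonneg; auto).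
    pose proof (tuples_lin (allch L) (gw_weight q) (Lam g) M k (fun u => gw_weight_nonneg q u Hq) (fun u => Lam_nonneg g u Hg) HW IH).
    assert (sumL (gw_weight q) (allch L) ^ k <= 1) by (apply pow_le1; lra).
    pose proof (Hq k); pose proof (Hg k).
    apply Rplus_le_compat.
    + rewrite <- (Rmult_1_r (q k * g k)) at 2. apply Rmult_le_compat_l; auto. apply Rmult_le_pos; auto.
    + apply Rle_trans with (q k * (INR k * M)). apply Rmult_le_compat_l; auto. nra.
  - intros ts Hts. apply tuples_len in Hts. subst k. unfold f. rewrite gw_weight_node, Lam_node. ring.
Qed.


Lemma exp_le x y : x <= y -> exp x <= exp y.
Proof. intros [H|H]. apply Rlt_le, exp_increasing; auto. subst; lra. Qed.

Lemma Rabs_le_inv' y a : Rabs y <= a -> - a <= y <= a.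
Proof. unfold Rabs; destruct (Rcase_abs y); lra. Qed.

Lemma exp_quad y : Rabs y <= 1/2 -> exp y <= 1 + y + 2 * y ^ 2.
Proof.
  intros Hy. apply Rabs_le_inv' in Hy.
  assert (E : exp y * exp (- y / 2) ^ 2 = 1).
  { simpl. rewrite Rmult_1_r, <- !exp_plus. replace (y + (- y / 2 + - y / 2)) with 0 by field. apply exp_0. }
  pose proof (exp_ineq1_le (- y / 2)). pose proof (exp_pos y).
  assert (H2 : (1 + - y / 2) ^ 2 <= exp (- y / 2) ^ 2) by (apply pow_incr; lra).
  assert (H3 : 1 <= (1 + y + 2 * y ^ 2) * (1 + - y / 2) ^ 2).
  { assert (A1 : 0 <= 5/4 - 7/4 * y + 1/2 * y^2) by (assert (0 <= y^2) by (apply pow2_ge_0); lra).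
    assert (A2 : 0 <= y ^ 2) by (apply pow2_ge_0).
    assert (0 <= y^2 * (5/4 - 7/4 * y + 1/2 * y^2)) by (apply Rmult_le_pos; auto).
    replace ((1 + y + 2 * y ^ 2) * (1 + - y / 2) ^ 2) with (1 + y^2 * (5/4 - 7/4 * y + 1/2 * y^2)) by field. lra. }
  assert (H4 : exp y * (1 + - y / 2) ^ 2 <= exp y * exp (- y / 2) ^ 2) by (apply Rmult_le_compat_l; lra).
  rewrite E in H4.
  assert (0 < (1 + - y / 2) ^ 2) by (apply pow_lt; lra).
  apply (Rmult_le_reg_r ((1 + - y / 2) ^ 2)); auto. lra.
Qed.

Lemma exp_pow x k : exp x ^ k = exp (INR k * x).
Proof. induction k. simpl; rewrite Rmult_0_l, exp_0; auto.
  rewrite S_INR; simpl. rewrite IHk, <- exp_plus. f_equal; ring. Qed.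

Lemma psum_cons a K : psum a (S K) = a 0%nat + psum (fun k => a (S k)) K.
Proof. unfold psum. simpl. f_equal. rewrite <- seq_shift. rewrite sumL_map. auto. Qed.

Lemma psum_ext a b K : (forall k, a k = b k) -> psum a K = psum b K.
Proof. intros H; apply sumL_ext; auto. Qed.

Lemma hoeff_cond (p : nat -> R) (th : R) :
  (forall k, 0 <= p k) -> (forall K, psum p K <= 1) -> 0 < p 0%nat -> Rabs th <= 1/2 ->
  forall K, psum (fun k => p k * exp (th * (ind0 k - p 0%nat) - 2 * th ^ 2) * 1 ^ k) K <= 1.
Proof.
  intros Hp H1 Hp0 Hth K. destruct K. unfold psum; simpl; lra.
  rewrite psum_cons. simpl ind0.
  set (p0 := p 0%nat) in *.
  assert (Hrest : psum (fun k => p (S k)) K <= 1 - p0).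
  { pose proof (H1 (S K)). rewrite psum_cons in H. fold p0 in H. lra. }
  rewrite (psum_ext _ (fun k => exp (th * (0 - p0) - 2 * th ^ 2) * p (S k))) by (intros; rewrite pow1; ring).
  rewrite psum_scal. rewrite pow1.
  assert (Hp01 : p0 <= 1) by (pose proof (H1 1%nat); unfold psum in H; simpl in H; fold p0 in H; lra).
  pose proof (Rabs_le_inv' _ _ Hth).
  assert (Ha : exp (th * (1 - p0)) <= 1 + th * (1 - p0) + 2 * (th * (1 - p0)) ^ 2).
  { apply exp_quad. apply Rabs_le. split; nra. }
  assert (Hb : exp (th * (0 - p0)) <= 1 + th * (0 - p0) + 2 * (th * (0 - p0)) ^ 2).
  { apply exp_quad. apply Rabs_le. split; nra. }
  assert (Hc : 1 + 2 * th ^ 2 <= exp (2 * th ^ 2)) by apply exp_ineq1_le.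
  assert (Hd : p0 * exp (th * (1 - p0)) + (1 - p0) * exp (th * (0 - p0)) <= 1 + 2 * th ^ 2).
  { apply Rle_trans with (p0 * (1 + th * (1 - p0) + 2 * (th * (1 - p0)) ^ 2) + (1 - p0) * (1 + th * (0 - p0) + 2 * (th * (0 - p0)) ^ 2)).
    apply Rplus_le_compat; apply Rmult_le_compat_l; lra.
    assert (0 <= th^2) by apply pow2_ge_0. assert (0 <= p0 * (1 - p0)) by nra. nra. }
  unfold Rminus at 1 3. rewrite !exp_plus, !exp_Ropp.
  fold (Rminus 1 p0) (Rminus 0 p0).
  set (E := exp (2 * th ^ 2)) in *. assert (E0 : 0 < E) by apply exp_pos.
  pose proof (exp_pos (th * (0 - p0))) as X0. pose proof (exp_pos (th * (1 - p0))) as X1.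
  assert (Hr : exp (th * (0 - p0)) * psum (fun k => p (S k)) K <= exp (th * (0 - p0)) * (1 - p0))
    by (apply Rmult_le_compat_l; lra).
  apply Rmult_le_reg_r with E; auto.
  replace ((p0 * (exp (th * (1 - p0)) * / E) * 1 + exp (th * (0 - p0)) * / E * psum (fun k : nat => p (S k)) K) * E)
    with (p0 * exp (th * (1 - p0)) + exp (th * (0 - p0)) * psum (fun k : nat => p (S k)) K) by (field; lra).
  lra.
Qed.

Definition trunc (p : nat -> R) (B : R) (k : nat) : R := if Rle_dec (INR k) B then p k else 0.

Lemma ntail_cond (p : nat -> R) (kap B : R) :
  (forall k, 0 <= p k) -> (forall K, psum p K <= 1) ->
  (forall K, psum (fun k => INR k * p k) K <= kap) -> 0 <= kap -> kap < 1 -> 0 < B ->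
  forall K, psum (fun k => trunc p B k * exp (((1 - kap) / 4 / B) * (1 - kap) / 2) * exp ((1 - kap) / 4 / B) ^ k) K
            <= exp ((1 - kap) / 4 / B).
Proof.
  intros Hp H1 Hk Hk0 Hk1 HB K.
  set (x := (1 - kap) / 4 / B). set (lam := x * (1 - kap) / 2).
  assert (Hx : 0 < x) by (unfold x; apply Rdiv_lt_0_compat; lra).
  assert (HxB : x * B = (1 - kap) / 4) by (unfold x; field; lra).
  apply Rle_trans with (psum (fun k => exp lam * (p k + (x + 2 * x^2 * B) * (INR k * p k))) K).
  - apply psum_le. intros k. unfold trunc. pose proof (exp_pos lam). pose proof (Hp k). pose proof (pos_INR k).
    destruct (Rle_dec (INR k) B) as [Hkb|Hkb].
    + rewrite exp_pow. rewrite (Rmult_comm (p k)), Rmult_assoc. apply Rmult_le_compat_l; [lra|].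
      assert (Hkx : INR k * x <= 1/4). { apply Rle_trans with (B * x). apply Rmult_le_compat_r. lra. exact Hkb. rewrite Rmult_comm, HxB; lra. }
      assert (Hq : exp (INR k * x) <= 1 + INR k * x + 2 * (INR k * x) ^ 2).
      { apply exp_quad. apply Rabs_le. split; nra. }
      assert (Hq2 : (INR k * x) ^ 2 <= x^2 * B * INR k).
      { simpl. rewrite Rmult_1_r. assert (0 <= x^2) by (apply pow2_ge_0). 
        replace (INR k * x * (INR k * x)) with (x^2 * (INR k * INR k)) by ring.
        rewrite Rmult_assoc. apply Rmult_le_compat_l; auto. nra. }
      nra.
    + rewrite !Rmult_0_l. apply Rmult_le_pos; [lra|].
      assert (0 <= x^2) by (apply pow2_ge_0). assert (0 <= INR k * p k) by (apply Rmult_le_pos; lra). assert (0 <= x + 2 * x^2 * B) by (assert (0 <= x^2 * B) by (apply Rmult_le_pos; lra); lra). assert (0 <= (x + 2 * x ^ 2 * B) * (INR k * p k)) by (apply Rmult_le_pos; lra). lra.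
  - rewrite psum_scal, psum_plus, psum_scal.
    specialize (H1 K). specialize (Hk K).
    assert (Hc : 0 <= x + 2 * x^2 * B) by (assert (0 <= x^2) by (apply pow2_ge_0); nra).
    apply Rle_trans with (exp lam * (1 + (x + 2 * x^2 * B) * kap)).
    { apply Rmult_le_compat_l. apply Rlt_le, exp_pos. apply Rplus_le_compat; auto. apply Rmult_le_compat_l; auto. }
    apply Rle_trans with (exp lam * exp ((x + 2 * x^2 * B) * kap)).
    { apply Rmult_le_compat_l. apply Rlt_le, exp_pos. apply exp_ineq1_le. }
    rewrite <- exp_plus. apply exp_le. unfold lam.
    replace (2 * x ^ 2 * B) with (2 * x * (x * B)) by ring. rewrite HxB.
    replace (x * (1 - kap) / 2 + (x + 2 * x * ((1 - kap) / 4)) * kap) with (x - x * ((1 - kap) * (1 - kap)) / 2) by field. assert (0 <= x * ((1 - kap) * (1 - kap))) by (apply Rmult_le_pos; [lra| apply Rle_0_sqr]). lra.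
Qed.


Definition gA (B : R) (k : nat) : R := if Rle_dec (INR k) B then 0 else 1.

Lemma gA_nonneg B k : 0 <= gA B k.
Proof. unfold gA; destruct Rle_dec; lra. Qed.

Lemma prod_eq_or (f g a : ptree -> R) ts : (forall u, 0 <= a u) ->
  (forall u, In u ts -> f u = g u \/ 1 <= a u) -> prodL f ts = prodL g ts \/ 1 <= sumL a ts.
Proof. intros Ha H. induction ts; [left; reflexivity|].
  assert (0 <= sumL a ts) by (apply sumL_nonneg; auto). pose proof (Ha a0).
  destruct (H a0 (or_introl eq_refl)) as [E|E].
  - destruct IHts as [E'|E']. intros; apply H; right; auto.
    left. unfold prodL in *; simpl. rewrite E, E'. auto.
    right. unfold sumL in *; simpl. lra.
  - right. unfold sumL in *; simpl. lra.
Qed.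

Lemma trunc_or p B t : (forall k, 0 <= p k) ->
  gw_weight (trunc p B) t = gw_weight p t \/ 1 <= Lam (gA B) t.
Proof. intros Hp. induction t as [ts IH] using ptree_ind2.
  rewrite !gw_weight_node, Lam_node. assert (0 <= sumL (Lam (gA B)) ts) by (apply sumL_nonneg; intros; apply Lam_nonneg, gA_nonneg).
  replace (trunc p B (length ts)) with (if Rle_dec (INR (length ts)) B then p (length ts) else 0) by reflexivity. replace (gA B (length ts)) with (if Rle_dec (INR (length ts)) B then 0 else 1) by reflexivity. destruct (Rle_dec (INR (length ts)) B).
  - destruct (prod_eq_or (gw_weight (trunc p B)) (gw_weight p) (Lam (gA B)) ts) as [E|E]; auto.
    intros; apply Lam_nonneg, gA_nonneg. left; rewrite E; auto. right; lra.
  - right; lra.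
Qed.

Lemma Lam_D th p0 t : Lam (fun k => th * (ind0 k - p0) - 2 * th ^ 2) t =
   th * (INR (tleaves t) - p0 * INR (tsize t)) - 2 * th ^ 2 * INR (tsize t).
Proof. rewrite (Lam_ext _ (fun k => th * ind0 k + (- (th * p0) - 2 * th ^ 2) * 1)) by (intros; ring).
  rewrite Lam_lin, Lam_leaves, Lam_size. ring. Qed.

Lemma Lam_const c t : Lam (fun _ => c) t = c * INR (tsize t).
Proof. rewrite (Lam_ext _ (fun k => c * 1 + 0 * 1)) by (intros; ring). rewrite Lam_lin, Lam_size. ring. Qed.

Lemma P_bound (p : nat -> R) (kap B m th x T : R) :
  (forall k, 0 <= p k) -> (forall K, psum p K <= 1) ->
  (forall K, psum (fun k => INR k * p k) K <= kap) -> 0 <= kap -> kap < 1 -> 0 < p 0%nat ->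
  0 < B -> 0 <= th <= 1/2 ->
  (forall K, psum (fun k => p k * gA B k) K <= T) ->
  forall L, NoDup L -> Forall (fun t => Rabs (INR (tleaves t) - p 0%nat * INR (tsize t)) >= x) L ->
  sumL (gw_weight p) L <= T / (1 - kap) + exp ((1 - kap) / 4 / B - ((1 - kap) / 4 / B) * (1 - kap) / 2 * m)
     + 2 * exp (- th * x + 2 * th ^ 2 * m).
Proof.
  intros Hp H1 Hk Hk0 Hk1 Hp0 HB Hth HT L HN HF.
  set (x' := (1 - kap) / 4 / B). set (lam := x' * (1 - kap) / 2).
  assert (Hx' : 0 < x') by (unfold x'; apply Rdiv_lt_0_compat; lra).
  assert (Hlam : 0 <= lam) by (unfold lam; apply Rmult_le_pos; [|lra]; apply Rmult_le_pos; lra).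
  set (Bc := exp (- th * x + 2 * th ^ 2 * m)).
  set (gp := fun k => th * (ind0 k - p 0%nat) - 2 * th ^ 2).
  set (gm := fun k => (- th) * (ind0 k - p 0%nat) - 2 * (- th) ^ 2).
  set (h1 := fun t => gw_weight p t * Lam (gA B) t).
  set (h2 := fun t => exp (- (lam * m)) * (gw_weight (trunc p B) t * exp (Lam (fun _ => lam) t))).
  set (h3 := fun t => Bc * (gw_weight p t * exp (Lam gp t))).
  set (h4 := fun t => Bc * (gw_weight p t * exp (Lam gm t))).
  assert (Hpt : forall t, In t L -> gw_weight p t <= h1 t + h2 t + h3 t + h4 t).
  { intros t Ht. rewrite Forall_forall in HF. specialize (HF t Ht).
    assert (Hw : 0 <= gw_weight p t) by (apply gw_weight_nonneg; auto).
    assert (Hq : 0 <= gw_weight (trunc p B) t) by (apply gw_weight_nonneg; intros; unfold trunc; destruct Rle_dec; auto; lra).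
    assert (H10 : 0 <= h1 t) by (unfold h1; apply Rmult_le_pos; auto; apply Lam_nonneg, gA_nonneg).
    assert (H20 : 0 <= h2 t) by (unfold h2; apply Rmult_le_pos; [apply Rlt_le, exp_pos|apply Rmult_le_pos; auto; apply Rlt_le, exp_pos]).
    assert (H30 : 0 <= h3 t) by (unfold h3; apply Rmult_le_pos; [apply Rlt_le, exp_pos|apply Rmult_le_pos; auto; apply Rlt_le, exp_pos]).
    assert (H40 : 0 <= h4 t) by (unfold h4; apply Rmult_le_pos; [apply Rlt_le, exp_pos|apply Rmult_le_pos; auto; apply Rlt_le, exp_pos]).
    destruct (trunc_or p B t Hp) as [E|E].
    2:{ assert (gw_weight p t <= h1 t) by (unfold h1; nra). lra. }
    set (N := INR (tsize t)). set (D := INR (tleaves t) - p 0%nat * N).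
    destruct (Rle_dec m N) as [HmN|HmN].
    { assert (gw_weight p t <= h2 t); [|lra]. unfold h2. rewrite E, Lam_const. fold N.
      rewrite (Rmult_comm (gw_weight p t)), <- Rmult_assoc, <- exp_plus.
      assert (1 <= exp (- (lam * m) + lam * N)) by (rewrite <- exp_0; apply exp_le; nra). nra. }
    assert (HF' : x <= D \/ D <= - x) by (unfold D, N; revert HF; unfold Rabs; destruct Rcase_abs; lra).
    destruct HF' as [HD|HD].
    { assert (gw_weight p t <= h3 t); [|lra]. unfold h3, gp, Bc. rewrite Lam_D. fold N. fold D.
      rewrite (Rmult_comm (gw_weight p t)), <- Rmult_assoc, <- exp_plus.
      assert (0 <= th ^ 2) by apply pow2_ge_0.
      assert (1 <= exp (- th * x + 2 * th ^ 2 * m + (th * D - 2 * th ^ 2 * N))) by (rewrite <- exp_0; apply exp_le; nra). nra. }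
    { assert (gw_weight p t <= h4 t); [|lra]. unfold h4, gm, Bc. rewrite Lam_D. fold N. fold D.
      rewrite (Rmult_comm (gw_weight p t)), <- Rmult_assoc, <- exp_plus.
      assert (0 <= th ^ 2) by apply pow2_ge_0.
      replace (- th * D - 2 * (- th) ^ 2 * N) with (- th * D - 2 * th ^ 2 * N) by ring.
      assert (1 <= exp (- th * x + 2 * th ^ 2 * m + (- th * D - 2 * th ^ 2 * N))) by (rewrite <- exp_0; apply exp_le; nra). nra. } }
  eapply Rle_trans. apply (sumL_le _ _ L Hpt).
  rewrite !sumL_plus.
  assert (S1 : sumL h1 L <= T / (1 - kap)).
  { apply lin_lemma; auto. apply gA_nonneg. }
  assert (S2 : sumL h2 L <= exp (x' - lam * m)).
  { unfold h2. rewrite sumL_scal. unfold Rminus. rewrite exp_plus, (Rmult_comm (exp (- (lam * m)))).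
    apply Rmult_le_compat_r. apply Rlt_le, exp_pos.
    apply exp_lemma; auto. intros; unfold trunc; destruct Rle_dec; auto; lra. apply exp_pos.
    apply ntail_cond; auto. }
  assert (Hth' : Rabs th <= 1/2) by (rewrite Rabs_right; lra).
  assert (Hth'' : Rabs (- th) <= 1/2) by (rewrite Rabs_Ropp, Rabs_right; lra).
  assert (S3 : sumL h3 L <= Bc).
  { unfold h3. rewrite sumL_scal. rewrite <- (Rmult_1_r Bc) at 2. apply Rmult_le_compat_l. apply Rlt_le, exp_pos.
    apply exp_lemma; auto. lra. apply hoeff_cond; auto. }
  assert (S4 : sumL h4 L <= Bc).
  { unfold h4. rewrite sumL_scal. rewrite <- (Rmult_1_r Bc) at 2. apply Rmult_le_compat_l. apply Rlt_le, exp_pos.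
    apply exp_lemma; auto. lra. apply hoeff_cond; auto. }
  fold x' lam Bc. lra.
Qed.


Fixpoint enum (d h : nat) : list ptree :=
  match h with O => [] | S h' => cover (enum d h') (S d) end.

Lemma cover_NoDup_gen C a K : NoDup C -> NoDup (flat_map (fun k => map Node (tuples C k)) (seq a K)).
Proof. intros HC. revert a; induction K; intros a; simpl. constructor.
  apply NoDup_app; auto.
  - apply map_inj_NoDup. intros x y E; injection E; auto. apply tuples_NoDup; auto.
  - intros t H1 H2. apply in_map_iff in H1. destruct H1 as [ts [<- Hts]].
    apply in_flat_map in H2. destruct H2 as [k [Hk H2]]. apply in_map_iff in H2. destruct H2 as [us [E Hus]].
    injection E; intros; subst. apply tuples_len in Hts. apply tuples_len in Hus. apply in_seq in Hk. lia.
Qed.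

Lemma enum_NoDup d h : NoDup (enum d h).
Proof. induction h; simpl. constructor. apply cover_NoDup_gen; auto. Qed.

Lemma bern W k : 0 <= W <= 1 -> 1 - W ^ k <= INR k * (1 - W).
Proof. intros H. induction k. simpl; lra. rewrite S_INR. simpl.
  assert (W ^ k <= 1) by (apply pow_le1; lra). assert (0 <= W ^ k) by (apply pow_le; lra). nra. Qed.

Lemma enum_sum p d h : sumL (gw_weight p) (enum d (S h)) = psum (fun k => p k * (sumL (gw_weight p) (enum d h)) ^ k) (S d).
Proof. change (enum d (S h)) with (cover (enum d h) (S d)). rewrite sum_cover. apply psum_ext. intros k.
  rewrite (sumL_ext _ (fun ts => p k * prodL (gw_weight p) ts)). rewrite sumL_scal, tuples_prod. auto.
  intros ts Hts. apply tuples_len in Hts. subst. apply gw_weight_node. Qed.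

Lemma enum_bound p kap d : (forall k, 0 <= p k) -> (forall K, psum p K <= 1) ->
  (forall K, psum (fun k => INR k * p k) K <= kap) -> 0 <= kap -> kap < 1 ->
  forall h, 1 - sumL (gw_weight p) (enum d h) <= (1 - psum p (S d)) / (1 - kap) + kap ^ h.
Proof.
  intros Hp H1 Hk Hk0 Hk1. set (Td := 1 - psum p (S d)).
  assert (HTd : 0 <= Td) by (unfold Td; specialize (H1 (S d)); lra).
  assert (HT' : 0 <= Td / (1 - kap)) by (apply Rmult_le_pos; auto; apply Rlt_le, Rinv_0_lt_compat; lra).
  induction h. simpl. unfold sumL; simpl; lra.
  rewrite enum_sum. set (W := sumL (gw_weight p) (enum d h)) in *.
  assert (HW : 0 <= W <= 1). { split. apply sumL_nonneg; intros; apply gw_weight_nonneg; auto. apply mass_le1; auto. apply enum_NoDup. }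
  assert (E : psum p (S d) - psum (fun k => p k * W ^ k) (S d) <= kap * (1 - W)).
  { assert (Eq : psum (fun k => p k * (1 - W ^ k)) (S d) = psum p (S d) - psum (fun k => p k * W ^ k) (S d)).
    { rewrite (psum_ext _ (fun k => p k + (-1) * (p k * W ^ k))) by (intros; ring). rewrite psum_plus, psum_scal. ring. }
    rewrite <- Eq.
    apply Rle_trans with (psum (fun k => (1 - W) * (INR k * p k)) (S d)).
    apply psum_le. intros k. pose proof (bern W k HW). pose proof (Hp k). nra.
    rewrite psum_scal. specialize (Hk (S d)). nra. }
  simpl. assert (0 <= kap ^ h) by (apply pow_le; lra).
  apply Rle_trans with (Td + kap * (1 - W)). unfold Td; lra.
  apply Rle_trans with (Td + kap * (Td / (1 - kap) + kap ^ h)). nra.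
  replace (Td / (1 - kap)) with (Td + kap * (Td / (1 - kap))) at 2 by (field; lra). lra.
Qed.

Lemma Q_lower (p : nat -> R) kap (Q : nat -> R) :
  (forall k, 0 <= p k) -> infinite_sum p 1 ->
  (forall K, psum (fun k => INR k * p k) K <= kap) -> 0 <= kap -> kap < 1 ->
  (forall n : nat, gw_prob p (fun t => (n <= tsize t)%nat) (Q n)) ->
  forall n, (1 <= n)%nat -> p n / 2 <= Q n.
Proof.
  intros Hp Hs Hk Hk0 Hk1 HQ n Hn.
  assert (H1 : forall K, psum p K <= 1) by (apply psum_le_inf; auto).
  assert (Hn' : 0 < INR n) by (apply lt_0_INR; lia).
  set (y := 1 / (4 * INR n)). assert (Hy : 0 < y) by (unfold y; apply Rdiv_lt_0_compat; lra).
  destruct (Hs (y * (1 - kap))) as [d Hd]. apply Rmult_lt_0_compat; lra.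
  specialize (Hd d (Nat.le_refl d)). rewrite sum_f_R0_psum in Hd. unfold Rdist in Hd.
  assert (HTd : (1 - psum p (S d)) / (1 - kap) <= y).
  { apply Rle_trans with (y * (1 - kap) / (1 - kap)). apply Rmult_le_compat_r. apply Rlt_le, Rinv_0_lt_compat; lra.
    revert Hd; unfold Rabs; destruct Rcase_abs; lra. right; field; lra. }
  destruct (pow_lt_1_zero kap ltac:(rewrite Rabs_right; lra) y Hy) as [h Hh].
  specialize (Hh h (Nat.le_refl h)). rewrite Rabs_right in Hh by (apply Rle_ge, pow_le; lra).
  pose proof (enum_bound p kap d Hp H1 Hk Hk0 Hk1 h) as EB.
  set (W := sumL (gw_weight p) (enum d h)) in *.
  assert (HW : 0 <= W <= 1). { split. apply sumL_nonneg; intros; apply gw_weight_nonneg; auto. apply mass_le1; auto. apply enum_NoDup. }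
  destruct (HQ n) as [Hub _].
  apply Rle_trans with (sumL (gw_weight p) (map Node (tuples (enum d h) n))).
  2:{ apply Hub. exists (map Node (tuples (enum d h) n)). split; [|split].
    - apply map_inj_NoDup. intros a b E; injection E; auto. apply tuples_NoDup, enum_NoDup.
    - apply Forall_forall. intros t Ht. apply in_map_iff in Ht. destruct Ht as [ts [<- Hts]].
      apply tuples_len in Hts. pose proof (tsize_ge_len ts). lia.
    - reflexivity. }
  rewrite sumL_map.
  rewrite (sumL_ext _ (fun ts => p n * prodL (gw_weight p) ts)).
  2:{ intros ts Hts. apply tuples_len in Hts. subst. apply gw_weight_node. }
  rewrite sumL_scal, tuples_prod. fold W.
  pose proof (bern W n HW). pose proof (Hp n).
  assert (INR n * (1 - W) <= 1/2). { apply Rle_trans with (INR n * (2 * y)). apply Rmult_le_compat_l; lra.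
    unfold y. right. field. lra. }
  nra.
Qed.


Lemma Rpower_pos x y : 0 < Rpower x y.
Proof. unfold Rpower; apply exp_pos. Qed.

Lemma ln_le a b : 0 < a -> a <= b -> ln a <= ln b.
Proof. intros Ha [H|H]. left; apply ln_increasing; auto. subst; lra. Qed.

Lemma Rpower_ge1 x d : 1 <= x -> 0 <= d -> 1 <= Rpower x d.
Proof. intros. rewrite <- (Rpower_O x) by lra. apply Rle_Rpower; auto. Qed.

Lemma Rpower_le1 x d : 1 <= x -> d <= 0 -> Rpower x d <= 1.
Proof. intros. rewrite <- (Rpower_O x) by lra. apply Rle_Rpower; auto. Qed.

Lemma half_spec (n : nat) : (4 <= n)%nat ->
  let m := Z.to_nat (Int_part (1/2 * INR n)) in (1 <= m)%nat /\ INR m <= INR n / 2 /\ (m < n)%nat.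
Proof.
  intros Hn m. pose proof (base_Int_part (1/2 * INR n)) as [H1 H2].
  assert (H4 : 4 <= INR n) by (replace 4 with (INR 4) by (simpl; lra); apply le_INR; auto).
  assert (Hz : (1 < Int_part (1/2 * INR n))%Z) by (apply lt_IZR; lra).
  assert (Em : INR m = IZR (Int_part (1/2 * INR n))).
  { unfold m. rewrite INR_IZR_INZ, Z2Nat.id by lia. auto. }
  assert (Hm1 : 1 < INR m) by lra.
  split; [|split].
  - apply INR_le. simpl. lra.
  - lra.
  - apply INR_lt. lra.
Qed.

Lemma finite_bounds (L : nat -> R) (n0 : nat) : (forall n, (1 <= n)%nat -> 0 < L n) ->
  exists C c, 0 < C /\ 0 < c /\ forall k, (1 <= k <= n0)%nat -> c <= L k <= C.
Proof.
  intros HL. induction n0.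
  - exists 1, 1. split; [lra|split;[lra|]]. intros; lia.
  - destruct IHn0 as [C [c [HC [Hc H]]]].
    exists (Rmax C (L (S n0))), (Rmin c (L (S n0))).
    pose proof (HL (S n0) ltac:(lia)).
    split; [apply Rlt_le_trans with C; auto; apply Rmax_l|].
    split; [apply Rmin_glb_lt; auto|].
    intros k Hk. destruct (Nat.eq_dec k (S n0)) as [->|Hne].
    + split; [apply Rmin_r|apply Rmax_r].
    + specialize (H k ltac:(lia)). split.
      apply Rle_trans with c; [apply Rmin_l|lra]. apply Rle_trans with C; [lra|apply Rmax_l].
Qed.

Lemma potter (L : nat -> R) (d : R) : slowly_varying_seq L -> 0 < d ->
  exists C c, 0 < C /\ 0 < c /\ forall k, (1 <= k)%nat ->
    c * Rpower (INR k) (- d) <= L k <= C * Rpower (INR k) d.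
Proof.
  intros [HLp HLv] Hd.
  assert (H2u : 1 < Rpower 2 d) by (rewrite <- (Rpower_O 2) by lra; apply Rpower_lt; lra).
  assert (H2l : Rpower 2 (-d) < 1) by (rewrite <- (Rpower_O 2) by lra; apply Rpower_lt; lra).
  set (eta := Rmin (Rpower 2 d - 1) (1 - Rpower 2 (-d))).
  assert (Heta : 0 < eta) by (apply Rmin_glb_lt; lra).
  assert (He1 : eta <= Rpower 2 d - 1) by apply Rmin_l.
  assert (He2 : eta <= 1 - Rpower 2 (-d)) by apply Rmin_r.
  clearbody eta.
  destruct (HLv (1/2) ltac:(lra) eta Heta) as [N1 HN1].
  set (n0 := Nat.max N1 4).
  destruct (finite_bounds L n0 HLp) as [C [c [HC [Hc Hb]]]].
  exists C, c. split; auto. split; auto.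
  assert (Hall : forall n k, (1 <= k <= n)%nat -> c * Rpower (INR k) (- d) <= L k <= C * Rpower (INR k) d).
  { induction n; intros k Hk. lia.
    destruct (le_lt_dec k n0) as [Hk0|Hk0].
    - specialize (Hb k ltac:(lia)).
      assert (Hk1 : 1 <= INR k) by (replace 1 with (INR 1) by auto; apply le_INR; lia).
      pose proof (Rpower_ge1 (INR k) d Hk1 ltac:(lra)). pose proof (Rpower_le1 (INR k) (-d) Hk1 ltac:(lra)).
      pose proof (Rpower_pos (INR k) (-d)). split; nra.
    - destruct (half_spec k ltac:(lia)) as [Hm1 [Hm2 Hm3]].
      set (m := Z.to_nat (Int_part (1/2 * INR k))) in *.
      pose proof (IHn m ltac:(lia)) as Hall_IH.
      specialize (HN1 k ltac:(lia)). unfold Rdist in HN1. fold m in HN1.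
      pose proof (HLp k ltac:(lia)) as Lk. pose proof (HLp m Hm1) as Lm.
      assert (Hr : Rpower 2 (-d) < L m / L k < Rpower 2 d).
      { revert HN1. unfold Rabs. destruct Rcase_abs; intros; lra. }
      assert (HmR : 1 <= INR m) by (replace 1 with (INR 1) by auto; apply le_INR; lia).
      assert (Ek : Rpower 2 d * Rpower (INR k / 2) d = Rpower (INR k) d).
      { rewrite Rpower_mult_distr by lra. f_equal; field. }
      assert (Ek' : Rpower 2 (-d) * Rpower (INR k / 2) (-d) = Rpower (INR k) (-d)).
      { rewrite Rpower_mult_distr by lra. f_equal; field. }
      assert (Mu : Rpower (INR m) d <= Rpower (INR k / 2) d) by (apply Rle_Rpower_l; lra).
      assert (Ml : Rpower (INR k / 2) (-d) <= Rpower (INR m) (-d)).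
      { rewrite !Rpower_Ropp. apply Rinv_le_contravar. apply Rpower_pos. apply Rle_Rpower_l; lra. }
      destruct Hall_IH as [IHl IHu].
      assert (Hr1 : Rpower 2 (-d) * L k < L m) by (apply (Rmult_lt_reg_r (/ L k)); [apply Rinv_0_lt_compat; lra|];
        replace (Rpower 2 (-d) * L k * / L k) with (Rpower 2 (-d)) by (field; lra); unfold Rdiv in Hr; lra).
      assert (Hr2 : L m < Rpower 2 d * L k) by (apply (Rmult_lt_reg_r (/ L k)); [apply Rinv_0_lt_compat; lra|];
        replace (Rpower 2 d * L k * / L k) with (Rpower 2 d) by (field; lra); unfold Rdiv in Hr; lra).
      pose proof (Rpower_pos 2 d). pose proof (Rpower_pos 2 (-d)).
      assert (E2 : Rpower 2 (-d) * Rpower 2 d = 1) by (rewrite <- Rpower_plus; replace (-d + d) with 0 by ring; apply Rpower_O; lra).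
      split.
      + rewrite <- Ek'.
        assert (X : c * Rpower (INR k / 2) (-d) <= L m) by (apply Rle_trans with (c * Rpower (INR m) (-d)); [apply Rmult_le_compat_l; lra| lra]).
        apply Rle_trans with (Rpower 2 (-d) * (Rpower 2 d * L k)).
        * replace (c * (Rpower 2 (- d) * Rpower (INR k / 2) (- d))) with (Rpower 2 (-d) * (c * Rpower (INR k / 2) (- d))) by ring.
          apply Rmult_le_compat_l; lra.
        * rewrite <- Rmult_assoc, E2; lra.
      + rewrite <- Ek.
        assert (X : L m <= C * Rpower (INR k / 2) d) by (apply Rle_trans with (C * Rpower (INR m) d); [lra| apply Rmult_le_compat_l; lra]).
        apply Rle_trans with (Rpower 2 d * (Rpower 2 (-d) * L k)).
        * rewrite <- Rmult_assoc, (Rmult_comm (Rpower 2 d)), E2; lra.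
        * replace (C * (Rpower 2 d * Rpower (INR k / 2) d)) with (Rpower 2 d * (C * Rpower (INR k / 2) d)) by ring.
          apply Rmult_le_compat_l; lra. }
  intros k Hk. apply (Hall k). lia.
Qed.


Lemma ln_le_sub1 z : 0 < z -> ln z <= z - 1.
Proof. intros Hz. rewrite <- (ln_exp (z - 1)). apply ln_le; auto. pose proof (exp_ineq1_le (z - 1)). lra. Qed.

Lemma term_tele y a : 2 <= y -> 0 < a ->
  a * Rpower y (- (a + 1)) <= Rpower (y - 1) (- a) - Rpower y (- a).
Proof.
  intros Hy Ha. unfold Rpower.
  assert (Hl : ln (y - 1) <= ln y - 1 / y).
  { replace (y - 1) with (y * ((y - 1) / y)) by (field; lra).
    rewrite ln_mult by (try apply Rdiv_lt_0_compat; lra).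
    pose proof (ln_le_sub1 ((y - 1) / y) ltac:(apply Rdiv_lt_0_compat; lra)).
    replace ((y - 1) / y - 1) with (- (1 / y)) in H by (field; lra). lra. }
  set (E := exp (- a * ln y)).
  assert (E1 : exp (- (a + 1) * ln y) = E * / y).
  { unfold E. replace (- (a + 1) * ln y) with (- a * ln y + - ln y) by ring. rewrite exp_plus, exp_Ropp, exp_ln by lra. auto. }
  assert (E2 : E * (1 + a / y) <= exp (- a * ln (y - 1))).
  { apply Rle_trans with (E * exp (a / y)). apply Rmult_le_compat_l. apply Rlt_le, exp_pos. apply exp_ineq1_le.
    unfold E. rewrite <- exp_plus. apply exp_le. unfold Rdiv. nra. }
  rewrite E1. fold E. assert (0 < E) by apply exp_pos.
  replace (a * (E * / y)) with (E * (1 + a / y) - E) by (field; lra). lra.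
Qed.

Lemma tail_tele (sg B : R) : 1 < sg -> 2 <= B ->
  forall K, psum (fun k => gA B k * Rpower (INR k) (- sg)) K <= Rpower (B / 2) (1 - sg) / (sg - 1).
Proof.
  intros Hs HB.
  set (F := fun y => Rpower y (1 - sg)).
  assert (Fdec : forall u v, 0 < u -> u <= v -> F v <= F u).
  { intros u v Hu Huv. unfold F. replace (1 - sg) with (- (sg - 1)) by ring. rewrite !Rpower_Ropp.
    apply Rinv_le_contravar. apply Rpower_pos. apply Rle_Rpower_l; lra. }
  assert (Inv : forall K, psum (fun k => gA B k * Rpower (INR k) (- sg)) K <= (F (B/2) - F (Rmax (INR K - 1) (B/2))) / (sg - 1)).
  { induction K.
    - unfold psum; simpl. rewrite Rmax_right by lra. unfold Rdiv; rewrite Rminus_diag; lra.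
    - rewrite psum_S. rewrite S_INR. replace (INR K + 1 - 1) with (INR K) by ring.
      unfold gA. destruct (Rle_dec (INR K) B) as [HK|HK].
      + rewrite Rmult_0_l, Rplus_0_r. eapply Rle_trans; [apply IHK|].
        apply Rmult_le_compat_r. apply Rlt_le, Rinv_0_lt_compat; lra.
        assert (F (Rmax (INR K) (B/2)) <= F (Rmax (INR K - 1) (B/2))); [|lra].
        apply Fdec. apply Rlt_le_trans with (B/2); [lra|apply Rmax_r].
        apply Rmax_lub. apply Rle_trans with (INR K); [lra|apply Rmax_l]. apply Rmax_r.
      + rewrite Rmult_1_l. rewrite Rmax_left in IHK by lra. rewrite Rmax_left by lra.
        pose proof (term_tele (INR K) (sg - 1) ltac:(lra) ltac:(lra)).
        replace (- (sg - 1 + 1)) with (- sg) in H by ring. replace (- (sg - 1)) with (1 - sg) in H by ring.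
        fold (F (INR K - 1)) (F (INR K)) in H.
        apply Rle_trans with ((F (B / 2) - F (INR K - 1)) / (sg - 1) + (F (INR K - 1) - F (INR K)) / (sg - 1)).
        * apply Rplus_le_compat; auto. apply (Rmult_le_reg_l (sg - 1)); [lra|]. unfold Rdiv. field_simplify; lra.
        * right; field; lra. }
  intros K. eapply Rle_trans; [apply Inv|]. apply Rmult_le_compat_r. apply Rlt_le, Rinv_0_lt_compat; lra.
  assert (0 < F (Rmax (INR K - 1) (B / 2))) by apply Rpower_pos. unfold F in *; lra.
Qed.


Lemma superpoly c e A : 0 < c -> 0 < e -> exists K2, 0 <= K2 /\
  forall x, 1 <= x -> exp (- (c * Rpower x e)) <= K2 * Rpower x (- A).
Proof.
  intros Hc He.
  set (j := S (Z.to_nat (up (Rabs A / e)))).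
  assert (Hj : A <= e * INR j).
  { unfold j. rewrite S_INR, INR_IZR_INZ.
    destruct (archimed (Rabs A / e)) as [H1 _].
    assert (Rabs A / e <= IZR (Z.of_nat (Z.to_nat (up (Rabs A / e))))).
    { destruct (Z_le_gt_dec 0 (up (Rabs A / e))) as [Hz|Hz].
      rewrite Z2Nat.id by auto. lra.
      assert (0 <= Rabs A / e) by (apply Rmult_le_pos; [apply Rabs_pos|apply Rlt_le, Rinv_0_lt_compat; auto]).
      assert (Hz2 : (up (Rabs A / e) < 0)%Z) by lia. apply IZR_lt in Hz2. lra. }
    assert (A <= Rabs A) by apply RRle_abs.
    assert (Rabs A = e * (Rabs A / e)) by (field; lra). nra. }
  assert (Hj0 : 0 < INR j) by (unfold j; apply lt_0_INR; lia).
  exists ((INR j / c) ^ j). split. apply pow_le. apply Rlt_le, Rdiv_lt_0_compat; auto.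
  intros x Hx. set (y := Rpower x e).
  assert (Hy : 1 <= y) by (apply Rpower_ge1; lra).
  assert (Ec : exp (c * y) = exp (c * y / INR j) ^ j) by (rewrite exp_pow; f_equal; field; lra).
  assert (Hb : (c * y / INR j) ^ j <= exp (c * y)).
  { rewrite Ec. apply pow_incr. split. apply Rlt_le, Rdiv_lt_0_compat; nra. pose proof (exp_ineq1_le (c * y / INR j)); lra. }
  assert (Hpos : 0 < (c * y / INR j) ^ j) by (apply pow_lt, Rdiv_lt_0_compat; nra).
  rewrite exp_Ropp.
  apply Rle_trans with (/ ((c * y / INR j) ^ j)). apply Rinv_le_contravar; auto.
  assert (Eyj : (c * y / INR j) ^ j = (c / INR j) ^ j * Rpower x (e * INR j)).
  { rewrite <- Rpower_mult. rewrite Rpower_pow by (apply Rpower_pos). fold y. rewrite <- Rpow_mult_distr. f_equal. field. lra. }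
  rewrite Eyj. rewrite Rinv_mult.
  assert (Ecj : / (c / INR j) ^ j = (INR j / c) ^ j) by (rewrite <- pow_inv; f_equal; field; lra).
  rewrite Ecj. apply Rmult_le_compat_l. apply pow_le, Rlt_le, Rdiv_lt_0_compat; auto.
  rewrite Rpower_Ropp. apply Rinv_le_contravar. apply Rpower_pos. apply Rle_Rpower; lra.
Qed.

Lemma final_o (P g : nat -> R) (a gm K c' : R) : 0 < gm -> 0 < c' -> 0 <= K ->
  (exists N0, forall n, (N0 <= n)%nat -> 0 <= P n <= K * Rpower (INR n) (- (a + gm)) /\ c' * Rpower (INR n) (- a) <= g n) ->
  little_o P g.
Proof.
  intros Hgm Hc HK [N0 HN] eps Heps.
  set (Y := Rmax 1 (K / (eps * c'))).
  set (N1 := Z.to_nat (up (Rpower Y (/ gm)))).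
  exists (Nat.max (Nat.max N0 N1) 1). intros n Hn.
  destruct (HN n ltac:(lia)) as [[HP0 HP] Hg].
  set (x := INR n) in *.
  assert (Hx1 : 1 <= x) by (unfold x; replace 1 with (INR 1) by auto; apply le_INR; lia).
  assert (HxY : Rpower Y (/ gm) <= x).
  { destruct (archimed (Rpower Y (/ gm))) as [H1 _].
    assert (0 < Rpower Y (/ gm)) by apply Rpower_pos.
    assert (HN1 : IZR (up (Rpower Y (/ gm))) = INR N1).
    { unfold N1. rewrite INR_IZR_INZ, Z2Nat.id; auto. apply le_IZR. lra. }
    assert (INR N1 <= x) by (apply le_INR; lia). lra. }
  assert (HY1 : 1 <= Y) by apply Rmax_l.
  assert (HxgY : Y <= Rpower x gm).
  { replace Y with (Rpower (Rpower Y (/ gm)) gm).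
    - apply Rle_Rpower_l. lra. split; auto. apply Rpower_pos.
    - rewrite Rpower_mult. replace (/ gm * gm) with 1 by (field; lra). apply Rpower_1. lra. }
  assert (Hpa : 0 < Rpower x (- a)) by apply Rpower_pos.
  assert (Ea : Rpower x (- (a + gm)) = Rpower x (- a) * / Rpower x gm).
  { replace (- (a + gm)) with (- a + - gm) by ring. rewrite Rpower_plus, (Rpower_Ropp x gm). auto. }
  assert (Hgp : 0 < Rpower x gm) by apply Rpower_pos.
  assert (Kle : K <= eps * c' * Rpower x gm).
  { apply Rle_trans with (eps * c' * Y). unfold Y. 
    apply Rle_trans with (eps * c' * (K / (eps * c'))). right; field; nra.
    apply Rmult_le_compat_l. nra. apply Rmax_r. apply Rmult_le_compat_l; nra. }
  rewrite Rabs_right by lra. rewrite Rabs_right by nra.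
  apply Rle_trans with (K * Rpower x (- (a + gm))); auto.
  rewrite Ea. apply Rle_trans with (eps * c' * Rpower x gm * (Rpower x (- a) * / Rpower x gm)).
  apply Rmult_le_compat_r; auto. apply Rmult_le_pos. lra. apply Rlt_le, Rinv_0_lt_compat; auto.
  replace (eps * c' * Rpower x gm * (Rpower x (- a) * / Rpower x gm)) with (eps * (c' * Rpower x (-a))) by (field; lra).
  apply Rmult_le_compat_l; lra.
Qed.


Theorem mainTheorem6
  (p : nat -> R) (Lt : nat -> R) (beta kappa : R)
  (hp_nonneg : forall i : nat, 0 <= p i)
  (hp_sum : infinite_sum p 1)
  (hkappa : infinite_sum (fun i => INR i * p i) kappa)
  (hkappa_lt : kappa < 1)
  (hp0 : 0 < p 0%nat)
  (hbeta : 2 < beta)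
  (hL : slowly_varying_seq Lt)
  (hp_tail : forall i : nat, (1 <= i)%nat -> p i = Lt i * Rpower (INR i) (- beta))
  (P Q : nat -> R)
  (hP : forall n : nat,
      gw_prob p (fun t => Rabs (INR (tleaves t) - p 0%nat * INR (tsize t)) >= INR n) (P n))
  (hQ : forall n : nat, gw_prob p (fun t => (n <= tsize t)%nat) (Q n)) :
  little_o P (fun n => Lt n * Rpower (INR n) (1 - beta)) /\
  little_o P (fun n => INR n * p n) /\
  little_o P Q.
Proof.
  assert (H1 : forall K, psum p K <= 1) by (apply psum_le_inf; auto).
  assert (Hk : forall K, psum (fun k => INR k * p k) K <= kappa).
  { apply psum_le_inf; auto. intros; apply Rmult_le_pos; auto. apply pos_INR. }
  assert (Hk0 : 0 <= kappa) by (specialize (Hk 0%nat); unfold psum in Hk; simpl in Hk; lra).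
  set (s := beta - 1). set (e := (s - 1) / (8 * (s + 1))).
  assert (He : 0 < e) by (unfold e; apply Rdiv_lt_0_compat; unfold s; lra).
  assert (He8 : e * (8 * (s + 1)) = s - 1) by (unfold e; field; unfold s; lra).
  assert (He1 : e < 1/8) by (unfold s in *; nra).
  set (a := s + 1 + e). set (gm := (2 - 2 * e) * (s - e) - a).
  assert (Hgm : 0 < gm) by (unfold gm, a; unfold s in *; nra).
  destruct (potter Lt e hL He) as [C [c [HC [Hc Hpot]]]].
  set (sg := beta - e). assert (Hsg : 1 < sg) by (unfold sg; unfold s in *; lra).
  assert (Hpk : forall k, (1 <= k)%nat -> p k <= C * Rpower (INR k) (- sg)).
  { intros k Hk1. rewrite hp_tail by auto. destruct (Hpot k Hk1) as [_ Hu].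
    pose proof (Rpower_pos (INR k) (- beta)).
    apply Rle_trans with (C * Rpower (INR k) e * Rpower (INR k) (- beta)). apply Rmult_le_compat_r; lra.
    rewrite Rmult_assoc, <- Rpower_plus. unfold sg. right; f_equal; f_equal; ring. }
  assert (Hxpos : forall n, (1 <= n)%nat -> 1 <= INR n) by (intros n Hn; replace 1 with (INR 1) by auto; apply le_INR; auto).
  assert (Hg1 : forall n, (1 <= n)%nat -> c / 2 * Rpower (INR n) (- a) <= Lt n * Rpower (INR n) (1 - beta)).
  { intros n Hn. destruct (Hpot n Hn) as [Hl _]. pose proof (Hxpos n Hn).
    pose proof (Rpower_pos (INR n) (- a)). pose proof (Rpower_pos (INR n) (1 - beta)).
    apply Rle_trans with (c * Rpower (INR n) (- e) * Rpower (INR n) (1 - beta)); [|apply Rmult_le_compat_r; lra].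
    rewrite Rmult_assoc, <- Rpower_plus.
    assert (Rpower (INR n) (- a) <= Rpower (INR n) (- e + (1 - beta))) by (apply Rle_Rpower; auto; unfold a, s; lra).
    nra. }
  assert (Hg2 : forall n, (1 <= n)%nat -> INR n * p n = Lt n * Rpower (INR n) (1 - beta)).
  { intros n Hn. rewrite hp_tail by auto. pose proof (Hxpos n Hn).
    replace (1 - beta) with (1 + - beta) by ring. rewrite Rpower_plus, Rpower_1 by lra. ring. }
  assert (Hg3 : forall n, (1 <= n)%nat -> c / 2 * Rpower (INR n) (- a) <= Q n).
  { intros n Hn. eapply Rle_trans; [|apply (Q_lower p kappa Q); auto].
    rewrite hp_tail by auto. destruct (Hpot n Hn) as [Hl _].
    pose proof (Rpower_pos (INR n) (- beta)).
    apply Rle_trans with (c * Rpower (INR n) (- e) * Rpower (INR n) (- beta) / 2); [|apply Rmult_le_compat_r; [lra|]; apply Rmult_le_compat_r; lra].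
    rewrite Rmult_assoc, <- Rpower_plus. replace (- e + - beta) with (- a) by (unfold a, s; ring). right; field. }
  set (c1 := (1 - kappa) * (1 - kappa) / 8).
  assert (Hc1 : 0 < c1) by (unfold c1; apply Rdiv_lt_0_compat; nra).
  destruct (superpoly c1 e (a + gm) Hc1 He) as [K2 [HK2 HK2b]].
  destruct (superpoly (1/8) e (a + gm) ltac:(lra) He) as [K3 [HK3 HK3b]].
  set (K1 := C * Rpower 2 (sg - 1) / ((sg - 1) * (1 - kappa))).
  assert (HK1 : 0 <= K1).
  { unfold K1. apply Rmult_le_pos. pose proof (Rpower_pos 2 (sg - 1)); nra. apply Rlt_le, Rinv_0_lt_compat. nra. }
  set (KP := K1 + exp 1 * K2 + 2 * K3).
  assert (HKP : 0 <= KP) by (unfold KP; pose proof (exp_pos 1); nra).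
  assert (HPb : forall n, (2 <= n)%nat -> 0 <= P n <= KP * Rpower (INR n) (- (a + gm))).
  { intros n Hn. set (x := INR n).
    assert (Hx2 : 2 <= x) by (unfold x; replace 2 with (INR 2) by (simpl; lra); apply le_INR; auto).
    split.
    { destruct (hP n) as [Hub _]. apply Hub. exists []. split; [constructor|split; [constructor|]]. reflexivity. }
    set (B := Rpower x (2 - 2 * e)). set (m := Rpower x (2 - e)). set (th := x / (4 * m)).
    assert (HxR : Rpower x 1 = x) by (apply Rpower_1; lra).
    assert (HB : x <= B) by (rewrite <- HxR at 1; apply Rle_Rpower; lra).
    assert (Hm : x <= m) by (rewrite <- HxR at 1; apply Rle_Rpower; lra).
    assert (Hth : 0 <= th <= 1/2).
    { unfold th. split. apply Rmult_le_pos; [lra|]. apply Rlt_le, Rinv_0_lt_compat; lra.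
      apply Rle_trans with (x / (4 * x)). apply Rmult_le_compat_l; [lra|]. apply Rinv_le_contravar; lra.
      replace (x / (4 * x)) with (1/4) by (field; lra); lra. }
    set (T := C * (Rpower (B / 2) (1 - sg) / (sg - 1))).
    assert (HT : forall K, psum (fun k => p k * gA B k) K <= T).
    { intros K. apply Rle_trans with (C * psum (fun k => gA B k * Rpower (INR k) (-sg)) K).
      2:{ unfold T. apply Rmult_le_compat_l; [lra|]. apply tail_tele; lra. }
      rewrite <- psum_scal. apply psum_le. intros k. unfold gA. destruct Rle_dec as [Hkb|Hkb].
      - rewrite !Rmult_0_r, Rmult_0_l, Rmult_0_r. lra.
      - rewrite Rmult_1_r, Rmult_1_l. apply Hpk. destruct k. simpl in Hkb; lra. lia. }
    assert (HPL : forall L, NoDup L -> Forall (fun t => Rabs (INR (tleaves t) - p 0%nat * INR (tsize t)) >= x) L ->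
      sumL (gw_weight p) L <= T / (1 - kappa) + exp ((1 - kappa) / 4 / B - ((1 - kappa) / 4 / B) * (1 - kappa) / 2 * m)
         + 2 * exp (- th * x + 2 * th ^ 2 * m)).
    { apply P_bound; auto; lra. }
    assert (Em : m = B * Rpower x e) by (unfold m, B; rewrite <- Rpower_plus; f_equal; ring).
    assert (HBpos : 0 < B) by lra.
    assert (HRe : 1 <= Rpower x e) by (apply Rpower_ge1; lra).
    assert (T1 : T / (1 - kappa) = K1 * Rpower x (- (a + gm))).
    { unfold T, K1.
      assert (E1 : Rpower (B / 2) (1 - sg) = Rpower B (1 - sg) * Rpower 2 (sg - 1)).
      { unfold Rdiv. rewrite <- Rpower_mult_distr by (try apply Rinv_0_lt_compat; lra). f_equal.
        unfold Rpower. rewrite ln_Rinv by lra. f_equal. ring. }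
      assert (E2 : Rpower B (1 - sg) = Rpower x (- (a + gm))).
      { unfold B. rewrite Rpower_mult. f_equal. unfold gm, sg, a, s. ring. }
      rewrite E1, E2. field. split; lra. }
    assert (T2 : exp ((1 - kappa) / 4 / B - ((1 - kappa) / 4 / B) * (1 - kappa) / 2 * m) <= exp 1 * (K2 * Rpower x (- (a + gm)))).
    { eapply Rle_trans; [|apply Rmult_le_compat_l; [apply Rlt_le, exp_pos|apply HK2b; lra]].
      rewrite <- exp_plus. apply exp_le.
      replace ((1 - kappa) / 4 / B * (1 - kappa) / 2 * m) with (c1 * Rpower x e) by (rewrite Em; unfold c1; field; lra).
      assert ((1 - kappa) / 4 / B <= 1). { apply Rle_trans with ((1 - kappa) / 4 / 1). unfold Rdiv. apply Rmult_le_compat_l.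
        apply Rmult_le_pos; lra. apply Rinv_le_contravar; lra. lra. }
      lra. }
    assert (T3 : exp (- th * x + 2 * th ^ 2 * m) <= K3 * Rpower x (- (a + gm))).
    { eapply Rle_trans; [|apply HK3b; lra]. apply exp_le.
      assert (Ex2 : x * x = m * Rpower x e).
      { unfold m. rewrite <- Rpower_plus. replace (2 - e + e) with (1 + 1) by ring. rewrite Rpower_plus, HxR. auto. }
      assert (0 < m) by lra.
      replace (- th * x + 2 * th ^ 2 * m) with (- (x * x) / (8 * m)) by (unfold th; field; lra).
      rewrite Ex2. right. field. lra. }
    destruct (hP n) as [_ Hlub]. apply Hlub.
    intros y [L [HN [HF ->]]]. eapply Rle_trans. apply HPL; auto.
    unfold KP. rewrite T1. nra. }
  split; [|split]; apply (final_o P _ a gm KP (c / 2)); auto; try lra; exists 2%nat; intros n Hn;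
    (split; [apply HPb; auto|]).
  - apply Hg1; lia.
  - rewrite Hg2 by lia. apply Hg1; lia.
  - apply Hg3; lia.
Qed.
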